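(* Let $\mathbf{T}$ be a $\sigma$-structure, $\mathbf{A}$ an instance of $\mathrm{CSP}(\mathbf{T})$, $\mathbb{F}$ a field, $D\ge1$, and $R$ a degree-$D$ pseudo-reduction operator for $P_{\mathbf{A}\to\mathbf{T}}$. Then for every $k\le D$ the collection $\kappa_R=\{\kappa_R(X):X\subseteq A,|X|\le k\}$, where $\kappa_R(X)=\{\varphi\in\mathrm{Hom}(\mathbf{A}[X],\mathbf{T}):R(m_\varphi)\ne0\}$, is $k$-consistent with all $\kappa_R(X)$ nonempty. Moreover, if $\mathbb{F}$ has characteristic $0$ and $R$ is integral, then for every $\mathbb{Z}$-linear map $h:\mathbb{Z}[\mathbf{x}_{A,T}]\to\mathbb{Z}$ with $h(1)=1$, the assignment $x_{X,\varphi}:=h(R(m_\varphi))$ for all $X\subseteq A$ with $|X|\le D$ and $\varphi\in\mathrm{Hom}(\mathbf{A}[X],\mathbf{T})$ is an integer solution of $L_D(\mathbf{A},\mathbf{T},\kappa_R)$ (and, restricted to $|X|\le k$, of $L_k(\mathbf{A},\mathbf{T},\kappa_R)$ for all $k\le D$). Consequently, if a degree-$D$ integral pseudo-reduction operator for $P_{\mathbf{A}\to\mathbf{T}}$ exists, the $\mathbb{Z}$-affine $k$-consistency algorithm for $\mathrm{CSP}(\mathbf{T})$ accepts $\mathbf{A}$ for all $k\le D$.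
   Context: Relational structures: a signature $\sigma$ is a finite set of relation symbols with arities; a $\sigma$-structure $\mathbf{A}$ has a finite domain $A$ and relations $\Gamma^{\mathbf{A}}\subseteq A^{\mathrm{ar}(\Gamma)}$; a homomorphism maps tuples of $\Gamma^{\mathbf{A}}$ into $\Gamma^{\mathbf{T}}$. An instance of $\mathrm{CSP}(\mathbf{T})$ is a $\sigma$-structure no tuple of whose relations has repeated entries. For $X\subseteq A$, $\mathbf{A}[X]$ is the substructure on $X$ (tuples with all entries in $X$), and $\mathrm{Hom}(\mathbf{A}[X],\mathbf{T})$ its set of homomorphisms to $\mathbf{T}$. Polynomial encoding: $\mathbb{F}[\mathbf{x}_{A,T}]$ is the polynomial ring in variables $x_{a,i}$ ($a\in A,i\in T$). $P_{\mathbf{A}\to\mathbf{T}}$ consists of: $\sum_{i\in T}x_{a,i}-1$ for $a\in A$; $x_{a,i}x_{a,i'}$ for $a\in A$, $i\ne i'$; for each $\Gamma\in\sigma$, $(a_1,\dots,a_r)\in\Gamma^{\mathbf{A}}$ and $(c_1,\dots,c_r)\in T^r\setminus\Gamma^{\mathbf{T}}$, the monomial $\prod_jx_{a_j,c_j}$; and $x_{a,i}^2-x_{a,i}$. For a partial map $\varphi:A\to T$, $m_\varphi=\prod_{a\in\mathrm{dom}\varphi}x_{a,\varphi(a)}$ (so $m_\emptyset=1$). A degree-$D$ pseudo-reduction operator for a set $\mathcal{P}\subseteq\mathbb{F}[x_1,\dots,x_n]$ is an $\mathbb{F}$-linear map $R$ on $\mathbb{F}[x_1,\dots,x_n]$ with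 (1) $R(1)=1$, (2) $R(p)=0$ for all $p\in\mathcal{P}$, (3) $R(x_im)=R(x_iR(m))$ for every monomial $m$ of degree at most $D-1$ and every variable $x_i$. When $\mathbb{F}$ has characteristic $0$ (so $\mathbb{Z}\subseteq\mathbb{F}$), $R$ is integral if $R(m)\in\mathbb{Z}[x_1,\dots,x_n]$ for every monomial $m$. $k$-consistency: a collection $\kappa=\{\kappa(X):X\subseteq A,|X|\le k\}$ with $\kappa(X)\subseteq\mathrm{Hom}(\mathbf{A}[X],\mathbf{T})$ is $k$-consistent if for all $Y\subseteq X$, $|X|\le k$: every $\varphi\in\kappa(Y)$ is the restriction of some $\psi\in\kappa(X)$, and every $\psi\in\kappa(X)$ restricts to an element of $\kappa(Y)$. $L_k(\mathbf{A},\mathbf{T},\kappa)$ is the system in variables $x_{X,\varphi}$ ($|X|\le k$, $\varphi\in\mathrm{Hom}(\mathbf{A}[X],\mathbf{T})$): $\sum_{\varphi\in\kappa(X)}x_{X,\varphi}=1$ for each $|X|\le k$, and $\sum_{\varphi\in\kappa(X),\varphi|_Y=\psi}x_{X,\varphi}=x_{Y,\psi}$ for all $Y\subseteq X$, $|X|\le k$, $\psi\in\kappa(Y)$. The $\mathbb{Z}$-affine $k$-consistency algorithm for $\mathrm{CSP}(\mathbf{T})$ accepts $\mathbf{A}$ iff there is a $k$-consistent collection $\kappa$ with all $\kappa(X)$ nonempty such that $L_k(\mathbf{A},\mathbf{T},\kappa)$ has a solution over $\mathbb{Z}$. *)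

(* Defs.v *)
From HB Require Import structures.
From mathcomp Require Import all_boot all_order all_algebra.
From mathcomp Require Import mpoly.
Set Implicit Arguments. Unset Strict Implicit. Unset Printing Implicit Defensive.
Import Order.TTheory GRing.Theory Num.Theory.
Local Open Scope ring_scope.

Record signature := Signature { sym : finType; ar : sym -> nat }.

Record structure (s : signature) := Structure {
  dom : finType;
  rel : forall G : sym s, {set (ar G).-tuple dom} }.

Section Defs.
Variable s : signature.
Variables (A T : structure s).

Definition is_instance : Prop :=
  forall (G : sym s) (t : (ar G).-tuple (dom A)), t \in rel A G -> uniq t.

Definition nv : nat := #|{: (dom A * dom T)%type}|.

Definition poly_AT (F : fieldType) := {mpoly F[nv]}.

Definition xv (F : fieldType) (a : dom A) (i : dom T) : {mpoly F[nv]} :=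
  'X_(enum_rank (a, i)).

Definition in_P (F : fieldType) (p : {mpoly F[nv]}) : Prop :=
  (exists a : dom A, p = \sum_(i : dom T) xv F a i - 1)
  \/ (exists (a : dom A) (i i' : dom T), i != i' /\ p = xv F a i * xv F a i')
  \/ (exists (G : sym s) (t : (ar G).-tuple (dom A)) (c : (ar G).-tuple (dom T)),
        [/\ t \in rel A G, c \notin rel T G &
            p = \prod_(j < ar G) xv F (tnth t j) (tnth c j)])
  \/ (exists (a : dom A) (i : dom T), p = xv F a i ^+ 2 - xv F a i).

Definition pseudo_reduction (F : fieldType) (D : nat)
    (R : {mpoly F[nv]} -> {mpoly F[nv]}) : Prop :=
  [/\ forall (c : F) (p q : {mpoly F[nv]}), R (c *: p + q) = c *: R p + R q,
      R 1 = 1,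
      forall p, in_P p -> R p = 0 &
      forall (i : 'I_nv) (m : 'X_{1..nv}), (mdeg m <= D - 1)%N ->
        R ('X_i * 'X_[m]) = R ('X_i * R 'X_[m])].

Definition char0 (F : fieldType) : Prop := [pchar F] =i pred0.

Definition zmap (F : fieldType) (q : {mpoly int[nv]}) : {mpoly F[nv]} :=
  map_mpoly (fun z : int => z%:~R) q.

Definition integral (F : fieldType) (R : {mpoly F[nv]} -> {mpoly F[nv]}) : Prop :=
  forall m : 'X_{1..nv}, exists q : {mpoly int[nv]}, zmap F q = R 'X_[m].

(* partial maps A -> T, as finite functions into option T *)
Definition parmap := {ffun dom A -> option (dom T)}.

Definition pdom (phi : parmap) : {set dom A} := [set a | phi a != None].

Definition restr (phi : parmap) (Y : {set dom A}) : parmap :=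
  [ffun a => if a \in Y then phi a else None].

Definition mono (F : fieldType) (phi : parmap) : {mpoly F[nv]} :=
  \prod_(a : dom A) (if phi a is Some i then xv F a i else 1).

(* Hom(A[X], T): partial maps with domain X that are homomorphisms of the
   substructure A[X] (tuples with all entries in X) into T *)
Definition Hom (X : {set dom A}) : {set parmap} :=
  [set phi : parmap | (pdom phi == X) &&
     [forall G : sym s, forall t : (ar G).-tuple (dom A),
        ((t \in rel A G) && all (fun a => a \in X) t) ==>
        [exists u : (ar G).-tuple (dom T),
            (u \in rel T G) && (map phi t == map Some u)]]].

Definition k_consistent (k : nat) (kappa : {set dom A} -> {set parmap}) : Prop :=
  (forall X : {set dom A}, (#|X| <= k)%N -> kappa X \subset Hom X) /\
  (forall X Y : {set dom A}, (#|X| <= k)%N -> Y \subset X ->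
     (forall phi, phi \in kappa Y -> exists2 psi, psi \in kappa X & restr psi Y = phi) /\
     (forall psi, psi \in kappa X -> restr psi Y \in kappa Y)).

Definition L_solution (k : nat) (kappa : {set dom A} -> {set parmap})
    (x : {set dom A} -> parmap -> int) : Prop :=
  (forall X : {set dom A}, (#|X| <= k)%N -> \sum_(phi in kappa X) x X phi = 1) /\
  (forall X Y : {set dom A}, (#|X| <= k)%N -> Y \subset X ->
     forall psi, psi \in kappa Y ->
       \sum_(phi in kappa X | restr phi Y == psi) x X phi = x Y psi).

Definition Zaffine_accepts (k : nat) : Prop :=
  exists kappa : {set dom A} -> {set parmap},
    [/\ k_consistent k kappa,
        forall X : {set dom A}, (#|X| <= k)%N -> kappa X != set0 &
        exists x : {set dom A} -> parmap -> int, L_solution k kappa x].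

Definition kappaR (F : fieldType) (R : {mpoly F[nv]} -> {mpoly F[nv]})
    (X : {set dom A}) : {set parmap} :=
  [set phi in Hom X | R (mono F phi) != 0].

End Defs.

(* Main.v *)
Require Import Defs.
From HB Require Import structures.
From mathcomp Require Import all_boot all_order all_algebra.
From mathcomp Require Import mpoly.
From mathcomp Require Import zify ring.
Set Implicit Arguments. Unset Strict Implicit. Unset Printing Implicit Defensive.
Import GRing.Theory.
Local Open Scope ring_scope.

Section Msize.
Variables (n : nat) (F : fieldType).
Implicit Types p q : {mpoly F[n]}.

Lemma msize_leP p k : (forall m, m \in msupp p -> (mdeg m < k)%N) -> (msize p <= k)%N.
Proof. by move=> h; rewrite msizeE; apply/bigmax_leqP_seq => m /h. Qed.

Lemma msizeD_le p q : (msize (p + q) <= maxn (msize p) (msize q))%N.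
Proof.
apply: msize_leP => m /msuppD_le; rewrite mem_cat => /orP [] /msize_mdeg_lt h.
  by rewrite (leq_trans h) // leq_maxl.
by rewrite (leq_trans h) // leq_maxr.
Qed.

Lemma msizeN p : msize (- p) = msize p.
Proof. by rewrite !msizeE; apply: perm_big; apply: msuppN. Qed.

Lemma msizeB_le p q : (msize (p - q) <= maxn (msize p) (msize q))%N.
Proof. by rewrite -(msizeN q); apply: msizeD_le. Qed.

Lemma msizeM_le' p q : (msize (p * q) <= (msize p + msize q).-1)%N.
Proof.
have [->|nz_p ] := eqVneq p 0; first by rewrite mul0r msize0.
have [->|nz_q ] := eqVneq q 0; first by rewrite mulr0 msize0.
by rewrite msizeM.
Qed.

Lemma msize_sum_le (I : Type) (r : seq I) (P : pred I) (G : I -> {mpoly F[n]}) k :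
  (forall i, P i -> msize (G i) <= k)%N -> (msize (\sum_(i <- r | P i) G i) <= k)%N.
Proof.
move=> h; apply: (big_ind (fun x => msize x <= k)%N) => //; first by rewrite msize0.
by move=> x y hx hy; rewrite (leq_trans (msizeD_le _ _)) // geq_max hx hy.
Qed.

Lemma msize_prod_le (I : Type) (r : seq I) (P : pred I) (G : I -> {mpoly F[n]}) :
  (msize (\prod_(i <- r | P i) G i) <= (\sum_(i <- r | P i) (msize (G i)).-1).+1)%N.
Proof.
elim: r => [|x r IH]; first by rewrite !big_nil msize1.
rewrite !big_cons; case: (P x) => //.
rewrite (leq_trans (msizeM_le' _ _)) //; lia.
Qed.
End Msize.

Section Zmap.
Variables (s : signature) (A T : structure s) (F : fieldType).
Local Notation N := (nv A T).

Lemma zmap_coef (q : {mpoly int[N]}) m : (zmap F q)@_m = (q@_m)%:~R.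
Proof. by rewrite /zmap mcoeff_map_mpoly. Qed.

Lemma zmapD (p q : {mpoly int[N]}) : zmap F (p + q) = zmap F p + zmap F q.
Proof. by apply/mpolyP => m; rewrite mcoeffD !zmap_coef mcoeffD intrD. Qed.

Lemma zmap0 : zmap F (0 : {mpoly int[N]}) = 0.
Proof. by apply/mpolyP => m; rewrite zmap_coef !mcoeff0. Qed.

Lemma zmap1 : zmap F (1 : {mpoly int[N]}) = 1.
Proof. by apply/mpolyP => m; rewrite zmap_coef !mcoeff1; case: (_ == _). Qed.

Lemma zmap_sum (I : Type) (r : seq I) (P : pred I) (G : I -> {mpoly int[N]}) :
  zmap F (\sum_(i <- r | P i) G i) = \sum_(i <- r | P i) zmap F (G i).
Proof. exact: (big_morph _ zmapD zmap0). Qed.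

Lemma zmap_inj : char0 F -> injective (@zmap s A T F).
Proof.
move=> /pcharf0P h0 p q e; apply/mpolyP => m.
have := congr1 (mcoeff m) e; rewrite !zmap_coef => /eqP; rewrite -subr_eq0 -intrB.
move=> hz; apply/eqP; rewrite -subr_eq0; move: hz.
case: (p@_m - q@_m) => n.
  by rewrite -pmulrn h0 => /eqP ->.
by rewrite NegzE mulrNz -pmulrn oppr_eq0 h0.
Qed.
End Zmap.

Section Red.
Variables (s : signature) (A T : structure s) (F : fieldType) (D : nat).
Variable R : {mpoly F[nv A T]} -> {mpoly F[nv A T]}.
Hypothesis HR : pseudo_reduction D R.
Local Notation N := (nv A T).
Implicit Types p q r : {mpoly F[N]}.

Lemma Rlin c p q : R (c *: p + q) = c *: R p + R q. Proof. by move: HR; rewrite /pseudo_reduction => -[h _ _ _]; apply: h. Qed.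
Lemma R1 : R 1 = 1. Proof. by move: HR; rewrite /pseudo_reduction => -[_ h _ _]. Qed.
Lemma RP p : in_P p -> R p = 0. Proof. by move: HR; rewrite /pseudo_reduction => -[_ _ h _]; apply: h. Qed.
Lemma R3 i m : (mdeg m <= D - 1)%N -> R ('X_i * 'X_[m]) = R ('X_i * R 'X_[m]).
Proof. by move: HR; rewrite /pseudo_reduction => -[] _ _ _; apply. Qed.

Lemma R0 : R 0 = 0.
Proof. by have := Rlin 1 0 0; rewrite !scale1r addr0 => /(congr1 (fun x => x - R 0)); rewrite subrr addrK. Qed.
Lemma RD p q : R (p + q) = R p + R q. Proof. by have := Rlin 1 p q; rewrite !scale1r. Qed.
Lemma RZ c p : R (c *: p) = c *: R p. Proof. by rewrite -[_ *: p]addr0 Rlin R0 addr0. Qed.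
Lemma Rsum (I : Type) (r : seq I) (P : pred I) (G : I -> {mpoly F[N]}) :
  R (\sum_(i <- r | P i) G i) = \sum_(i <- r | P i) R (G i).
Proof. exact: (big_morph R RD R0). Qed.

Lemma L1 i r : (msize r <= D)%N -> R ('X_i * r) = R ('X_i * R r).
Proof.
move=> hr; rewrite [in LHS](mpolyE r) big_distrr /= Rsum.
transitivity (R (\sum_(m <- msupp r) ('X_i * (r@_m *: R 'X_[m])))).
  rewrite Rsum; apply: eq_big_seq => m hm.
  rewrite -!scalerAr !RZ R3 //.
  by have := msize_mdeg_lt hm; lia.
rewrite -big_distrr /=; congr (R (_ * _)).
by rewrite [in RHS](mpolyE r) Rsum; apply: eq_bigr => m _; rewrite RZ.
Qed.

Lemma L2mono d : forall m r, mdeg m = d -> R r = 0 -> (d + msize r <= D.+1)%N ->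
  R ('X_[m] * r) = 0.
Proof.
elim: d => [|d IH] m r hm hr hd.
  by move/eqP: hm; rewrite mdeg_eq0 => /eqP ->; rewrite mpolyX0 mul1r.
have [i hi] : exists i, m i != 0%N.
  apply/existsP; apply: contraTT (isT : true) => /existsPn h0.
  have : mdeg m = 0%N by rewrite mdegE big1 // => i _; apply/eqP; rewrite -[_ == _]negbK h0.
  by rewrite hm.
have hle : (U_(i) <= m)%MM by rewrite lep1mP.
have em := submK hle.
have hm' : mdeg (m - U_(i))%MM = d.
  by move: hm; rewrite -{1}em mdegD mdeg1 addn1 => -[].
rewrite -em mpolyXD [_ * 'X_i]mulrC -mulrA L1.
  by rewrite (IH _ _ hm') // ?mulr0 ?R0 //; lia.
rewrite (leq_trans (msizeM_le' _ _)) // msizeX hm'; lia.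
Qed.

Lemma L2 q r : R r = 0 -> (msize q + msize r <= D.+2)%N -> R (q * r) = 0.
Proof.
move=> hr hs; rewrite (mpolyE q) big_distrl /= Rsum big1_seq // => m /andP [_ hm].
rewrite -scalerAl RZ (L2mono (erefl _)) ?scaler0 //.
have := msize_mdeg_lt hm; lia.
Qed.


Definition mo (a : dom A) (o : option (dom T)) : {mpoly F[N]} :=
  if o is Some v then xv F a v else 1.

Lemma monoE (phi : parmap A T) : mono F phi = \prod_a mo a (phi a).
Proof. by []. Qed.

Lemma pdom_restr (phi : parmap A T) S : pdom (restr phi S) = pdom phi :&: S.
Proof. by apply/setP => a; rewrite !inE ffunE; case: (a \in S); rewrite ?andbT ?andbF. Qed.

Lemma mono_split (phi : parmap A T) S :
  mono F phi = mono F (restr phi S) * mono F (restr phi (~: S)).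
Proof.
rewrite !monoE -big_split; apply: eq_bigr => a _; rewrite !ffunE inE.
by case: (a \in S) => /=; rewrite ?mulr1 ?mul1r.
Qed.

Lemma msize_mono (phi : parmap A T) : (msize (mono F phi) <= #|pdom phi|.+1)%N.
Proof.
rewrite monoE (leq_trans (msize_prod_le _ _ _)) // ltnS -sum1_card [X in (_ <= X)%N]big_mkcond /=.
apply: leq_sum => a _; rewrite inE /mo; case: (phi a) => [v|] /=; last by rewrite msize1.
by rewrite /xv msizeX mdeg1.
Qed.

Lemma L23 (phi : parmap A T) X S : pdom phi = X -> (#|X| <= D)%N ->
  R (mono F (restr phi S)) = 0 -> R (mono F phi) = 0.
Proof.
move=> hX hD h0; rewrite (mono_split phi S) mulrC; apply: L2 => //.
have h1 := msize_mono (restr phi S); have h2 := msize_mono (restr phi (~: S)).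
rewrite !pdom_restr hX -setDE in h1 h2.
have := cardsID S X; lia.
Qed.

Hypothesis HA : is_instance A.

Lemma L4 (phi : parmap A T) X : pdom phi = X -> (#|X| <= D)%N ->
  phi \notin Defs.Hom T X -> R (mono F phi) = 0.
Proof.
move=> hX hD; rewrite inE hX eqxx /= => /forallPn [G] /forallPn [t].
rewrite negb_imply => /andP [/andP [ht hall] /existsPn hnu].
have hv : forall j : 'I_(ar G), exists v, phi (tnth t j) = Some v.
  move=> j; have : tnth t j \in X by apply: (allP hall); apply: mem_tnth.
  by rewrite -hX inE; case: (phi _) => // v _; exists v.
have [f hf] := fin_all_exists hv.
pose c := [tuple f j | j < ar G].
have hmap : map phi t == map Some c.
  apply/eqP; rewrite -[in LHS](map_tnth_enum t) -(map_tnth_enum c) -!map_comp.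
  by apply: eq_map => j /=; rewrite tnth_mktuple hf.
have hc : c \notin Defs.rel T G by move: (hnu c); rewrite hmap andbT.
pose p := \prod_(j < ar G) xv F (tnth t j) (tnth c j).
have hp : R p = 0 by apply: RP; right; right; left; exists G, t, c.
apply: (L23 (S := [set a | a \in t]) hX hD).
rewrite -hp monoE; congr (R _).
transitivity (\prod_(a in [set a | a \in t]) mo a (phi a)).
  by rewrite [RHS]big_mkcond; apply: eq_bigr => a _; rewrite ffunE; case: (_ \in _).
transitivity (\prod_(a <- t) mo a (phi a)).
  by rewrite big_uniq ?(HA ht) //; apply: eq_bigl => a; rewrite inE.
by rewrite big_tuple; apply: eq_bigr => j _; rewrite hf tnth_mktuple.
Qed.

Lemma Hom_restr (phi : parmap A T) (X Y : {set dom A}) : phi \in Defs.Hom T X -> Y \subset X ->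
  restr phi Y \in Defs.Hom T Y.
Proof.
rewrite !inE => /andP [/eqP hX /forallP h] hYX.
rewrite pdom_restr hX (setIidPr hYX) eqxx /=; apply/forallP => G; apply/forallP => t.
apply/implyP => /andP [ht hall].
have := h G => /forallP /(_ t) /implyP; rewrite ht /=.
have -> : all (fun a => a \in X) t by apply: sub_all hall => a /(subsetP hYX).
move=> /(_ isT) /existsP [u /andP [hu hm]]; apply/existsP; exists u.
rewrite hu -(eqP hm) /=; apply/eqP/eq_in_map => a ha.
by rewrite ffunE (allP hall a ha).
Qed.

Definition sa (a : dom A) : {mpoly F[N]} := \sum_(v : dom T) xv F a v.

Lemma sum_ext (X Y : {set dom A}) (psi : parmap A T) : Y \subset X -> pdom psi = Y ->
  \sum_(phi : parmap A T | (pdom phi == X) && (restr phi Y == psi)) mono F phi =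
  mono F psi * \prod_(a in X :\: Y) sa a.
Proof.
move=> hYX hpsi.
pose w a (o : option (dom T)) : {mpoly F[N]} :=
  if a \in Y then (if o == psi a then mo a o else 0)
  else if a \in X then (if o != None then mo a o else 0)
  else (if o == None then 1 else 0).
have e1 : forall a, \sum_o w a o =
   if a \in Y then mo a (psi a) else if a \in X then sa a else 1.
  move=> a; rewrite /w; case: (a \in Y); first by rewrite -big_mkcond big_pred1_eq.
  case: (a \in X); last by rewrite -big_mkcond big_pred1_eq.
  rewrite -big_mkcond (reindex_omap Some id) /=; last by case.
  by apply: eq_bigl => v; rewrite eqxx.
pose cond (f : parmap A T) a :=
  if a \in Y then f a == psi a else if a \in X then f a != None else f a == None.
have ec : forall f : parmap A T,
    ((pdom f == X) && (restr f Y == psi)) = [forall a, cond f a].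
  move=> f; apply/andP/forallP => [[/eqP hX /eqP hr] a | h].
    rewrite /cond; case: ifP => aY.
      by rewrite -hr ffunE aY.
    case: ifP => aX; first by move: aX; rewrite -hX inE.
    by move: aX; rewrite -hX inE => /negbFE.
  split; apply/eqP.
    apply/setP => a; have := h a; rewrite /cond inE.
    case: ifP => aY.
      move=> /eqP ->; have : a \in pdom psi by rewrite hpsi.
      by rewrite inE => ->; rewrite (subsetP hYX).
    by case: ifP => // _ /eqP ->.
  apply/ffunP => a; rewrite ffunE; have := h a; rewrite /cond.
  case: ifP => aY; first by move/eqP.
  have : a \notin pdom psi by rewrite hpsi aY.
  by rewrite inE negbK => /eqP ->.
have e2 : forall f : parmap A T, \prod_a w a (f a) =
    if (pdom f == X) && (restr f Y == psi) then mono F f else 0.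
  move=> f; rewrite ec; case: forallP => h.
    rewrite monoE; apply: eq_bigr => a _; have := h a; rewrite /w /cond.
    case: ifP => _; first by move=> ->.
    case: ifP => _; first by move=> ->.
    by move=> /eqP ->.
  have : ~~ [forall a, cond f a] by apply/negP => /forallP.
  rewrite negb_forall => /existsP [a ha].
  rewrite (bigD1 a) //= [w a _](_ : _ = 0) ?mul0r //.
  move: ha; rewrite /w /cond; case: ifP => _; first by move/negbTE ->.
  case: ifP => _; first by move/negbTE ->.
  by move/negbTE ->.
rewrite big_mkcond /=.
transitivity (\sum_(f : parmap A T) \prod_a w a (f a)).
  by apply: eq_bigr => f _; rewrite e2.
rewrite -(bigA_distr_bigA w) /=.
rewrite (eq_bigr _ (fun a _ => e1 a)) (bigID (fun a => a \in Y)) /=.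
rewrite monoE (bigID (fun a => a \in Y) _ (fun a => mo a (psi a))) /=.
rewrite [X in _ * X = _](eq_bigr (fun a => if a \in X then sa a else 1)); last first.
  by move=> a /negbTE ->.
rewrite [X in _ = _ * X * _]big1; last first.
  move=> a aY; have : a \notin pdom psi by rewrite hpsi.
  by rewrite inE negbK => /eqP ->.
rewrite mulr1 [X in _ = _ * X]big_mkcond /= [X in _ * X = _]big_mkcond /=.
congr (_ * _); first by apply: eq_bigr => a ->.
apply: eq_bigr => a _; rewrite inE.
by case: (a \in Y); case: (a \in X).
Qed.

Lemma msize_sa a : (msize (sa a) <= 2)%N.
Proof. by apply: msize_sum_le => v _; rewrite /xv msizeX mdeg1. Qed.

Lemma L5 k : forall (Z : {set dom A}) m, #|Z| = k -> (msize m + k <= D.+1)%N ->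
  R (m * \prod_(a in Z) sa a) = R m.
Proof.
elim: k => [|k IH] Z m hZ hD.
  by move/eqP: hZ; rewrite cards_eq0 => /eqP ->; rewrite big_set0 mulr1.
have [a aZ] : exists a, a \in Z by apply/set0Pn; rewrite -card_gt0 hZ.
have hZ' : #|Z :\ a| = k by move: hZ; rewrite (cardsD1 a) aZ => -[].
rewrite (big_setD1 a aZ) /=.
set P := \prod_(i in Z :\ a) sa i.
have -> : m * (sa a * P) = m * P + m * P * (sa a - 1) by ring.
rewrite RD (IH _ _ hZ'); last by lia.
rewrite (L2 (q := m * P)) ?addr0 //.
  by apply: RP; left; exists a.
have hP : (msize P <= k.+1)%N.
  rewrite (leq_trans (msize_prod_le _ _ _)) // ltnS -hZ' -sum1_card.
  by apply: leq_sum => i _; have := msize_sa i; lia.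
have h1 := msizeM_le' m P.
have h2 : (msize (sa a - 1) <= 2)%N.
  by rewrite (leq_trans (msizeB_le _ _)) // geq_max msize_sa msize1.
lia.
Qed.

Lemma KS (X Y : {set dom A}) (psi : parmap A T) : Y \subset X -> (#|X| <= D)%N ->
  pdom psi = Y ->
  \sum_(phi in Defs.Hom T X | restr phi Y == psi) R (mono F phi) = R (mono F psi).
Proof.
move=> hYX hD hpsi.
transitivity (\sum_(phi : parmap A T | (pdom phi == X) && (restr phi Y == psi)) R (mono F phi)).
  rewrite big_mkcond [RHS]big_mkcond; apply: eq_bigr => phi _.
  case hH: (phi \in Defs.Hom T X).
    by move: (hH); rewrite inE => /andP [-> _].
  case: (pdom phi =P X) => //= hX.
  by rewrite (L4 hX hD) ?hH //; case: ifP.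
rewrite -Rsum sum_ext //.
apply: (L5 (erefl _)).
have h1 := msize_mono psi; rewrite hpsi in h1.
have := cardsID Y X; rewrite (setIidPr hYX); lia.
Qed.

Lemma KK (X Y : {set dom A}) (psi : parmap A T) : Y \subset X -> (#|X| <= D)%N ->
  pdom psi = Y ->
  \sum_(phi in kappaR R X | restr phi Y == psi) R (mono F phi) = R (mono F psi).
Proof.
move=> hYX hD hpsi; rewrite -(KS hYX hD hpsi).
rewrite big_mkcond [RHS]big_mkcond; apply: eq_bigr => phi _.
rewrite /kappaR inE; case: (phi \in Defs.Hom T X) => //=.
by case: eqP => [->|]; case: ifP.
Qed.

Definition e0 : parmap A T := [ffun _ => None].

Lemma restr0 (phi : parmap A T) : restr phi set0 = e0.
Proof. by apply/ffunP => a; rewrite !ffunE inE. Qed.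

Lemma pdom_e0 : pdom e0 = set0.
Proof. by apply/setP => a; rewrite !inE ffunE. Qed.

Lemma mono_e0 : mono F e0 = 1.
Proof. by rewrite monoE big1 // => a _; rewrite ffunE. Qed.

Lemma KK0 (X : {set dom A}) : (#|X| <= D)%N ->
  \sum_(phi in kappaR R X) R (mono F phi) = 1.
Proof.
move=> hD; rewrite -R1 -mono_e0 -(KK (sub0set X) hD pdom_e0).
by apply: eq_bigl => phi; rewrite restr0 eqxx andbT.
Qed.

Lemma exists_nz (X Y : {set dom A}) (psi : parmap A T) : Y \subset X -> (#|X| <= D)%N ->
  pdom psi = Y -> R (mono F psi) != 0 ->
  exists2 phi, phi \in kappaR R X & restr phi Y = psi.
Proof.
move=> hYX hD hpsi hnz.
have : [exists phi, (phi \in kappaR R X) && (restr phi Y == psi)].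
  apply: contraNT hnz => /existsPn h; rewrite -(KK hYX hD hpsi) big_pred0 //.
  by move=> phi; exact: negbTE (h phi).
by move=> /existsP [phi /andP [h1 /eqP h2]]; exists phi.
Qed.

Lemma Part1 k : (k <= D)%N ->
  k_consistent k (kappaR R) /\ (forall X : {set dom A}, (#|X| <= k)%N -> kappaR R X != set0).
Proof.
move=> hk; split; first split.
- by move=> X _; apply/subsetP => phi; rewrite inE => /andP [].
- move=> X Y hX hYX; split.
    move=> phi; rewrite inE => /andP [hH hnz].
    apply: (exists_nz hYX) => //; first by apply: leq_trans hk.
    by move: hH; rewrite inE => /andP [/eqP].
  move=> psi; rewrite inE => /andP [hH hnz]; rewrite inE (Hom_restr hH hYX) /=.
  apply: contra hnz => /eqP h; apply/eqP; apply: (L23 (X := X) (S := Y)) => //.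
    by move: hH; rewrite inE => /andP [/eqP].
  by apply: leq_trans hk.
- move=> X hX; have hD : (#|X| <= D)%N by apply: leq_trans hk.
  have hnz : R (mono F e0) != 0 by rewrite mono_e0 R1 oner_neq0.
  have [phi hphi _] := exists_nz (sub0set X) hD pdom_e0 hnz.
  by apply/set0Pn; exists phi.
Qed.

Lemma Part2 : char0 F ->
  forall (Rz : parmap A T -> {mpoly int[nv A T]}),
    (forall phi : parmap A T, zmap F (Rz phi) = R (mono F phi)) ->
  forall h : {mpoly int[nv A T]} -> int,
    (forall p q : {mpoly int[nv A T]}, h (p + q) = h p + h q) ->
    h 1 = 1 ->
    L_solution D (kappaR R) (fun X phi => h (Rz phi)).
Proof.
move=> h0 Rz hRz h hadd h1.
have hz : h 0 = 0.
  by have := hadd 0 0; rewrite addr0 => /(congr1 (fun x => x - h 0)); rewrite subrr addrK.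
have hsum : forall (I : Type) (r : seq I) (P : pred I) G,
    h (\sum_(i <- r | P i) G i) = \sum_(i <- r | P i) h (G i).
  by move=> I r P G; apply: (big_morph h hadd hz).
split.
  move=> X hX; rewrite -hsum -h1; congr (h _); apply: (zmap_inj h0).
  by rewrite zmap_sum zmap1 (eq_bigr _ (fun phi _ => hRz phi)) KK0.
move=> X Y hX hYX psi hpsi; rewrite -hsum; congr (h _); apply: (zmap_inj h0).
rewrite zmap_sum (eq_bigr _ (fun phi _ => hRz phi)) hRz KK //.
by move: hpsi; rewrite inE => /andP [hH _]; move: hH; rewrite inE => /andP [/eqP].
Qed.
End Red.

Lemma L_mono (s : signature) (A T : structure s) k D (kappa : {set dom A} -> {set parmap A T}) x :
  (k <= D)%N -> L_solution D kappa x -> L_solution k kappa x.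
Proof.
move=> hk [h1 h2]; split.
  by move=> X hX; apply: h1; apply: leq_trans hk.
by move=> X Y hX; apply: h2; apply: leq_trans hk.
Qed.

Lemma mono_monomial (s : signature) (A T : structure s) (F : fieldType) (phi : parmap A T) :
  exists m, mono F phi = 'X_[m].
Proof.
rewrite monoE; apply: (big_ind (fun p => exists m, p = 'X_[m])).
- by exists 0%MM; rewrite mpolyX0.
- by move=> x y [m1 ->] [m2 ->]; exists (m1 + m2)%MM; rewrite mpolyXD.
- move=> a _; rewrite /mo; case: (phi a) => [v|]; first by exists U_(enum_rank (a, v))%MM.
  by exists 0%MM; rewrite mpolyX0.
Qed.


Theorem mainTheorem4 (s : signature) (T A : structure s) (F : fieldType)
    (D : nat) (R : {mpoly F[nv A T]} -> {mpoly F[nv A T]}) :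
  is_instance A -> (1 <= D)%N -> @pseudo_reduction s A T F D R ->
  [/\ (* k-consistency with nonempty sets *)
      (forall k : nat, (k <= D)%N ->
         k_consistent k (kappaR R) /\
         (forall X : {set dom A}, (#|X| <= k)%N -> kappaR R X != set0)),
      (* integer solutions from Z-linear maps h with h(1) = 1 *)
      (char0 F -> @integral s A T F R ->
       forall (Rz : parmap A T -> {mpoly int[nv A T]}),
         (forall phi : parmap A T, zmap F (Rz phi) = R (mono F phi)) ->
       forall h : {mpoly int[nv A T]} -> int,
         (forall p q, h (p + q) = h p + h q) ->
         (forall (c : int) p, h (c *: p) = c * h p) ->
         h 1 = 1 ->
         L_solution D (kappaR R) (fun X phi => h (Rz phi)) /\
         (forall k : nat, (k <= D)%N ->
            L_solution k (kappaR R) (fun X phi => h (Rz phi)))) &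
      (* consequence for the Z-affine k-consistency algorithm *)
      (char0 F ->
       (exists R' : {mpoly F[nv A T]} -> {mpoly F[nv A T]},
          @pseudo_reduction s A T F D R' /\ @integral s A T F R') ->
       forall k : nat, (k <= D)%N -> Zaffine_accepts A T k)].
Proof.
move=> HA _ HR; split.
- by move=> k hk; apply: (Part1 HR HA hk).
- move=> h0 _ Rz hRz h hadd _ h1.
  have hL := Part2 HR HA h0 hRz hadd h1.
  by split => // k hk; apply: (L_mono hk hL).
move=> h0 [R' [HR' HI]] k hk.
have [hc hne] := Part1 HR' HA hk.
have hex : forall phi : parmap A T, exists q, zmap F q == R' (mono F phi).
  by move=> phi; have [m ->] := mono_monomial F phi; have [q hq] := HI m; exists q; apply/eqP.
exists (kappaR R'); split => //.
exists (fun X phi => (xchoose (hex phi))@_0).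
apply: (L_mono hk).
apply: (Part2 (h := fun p => p@_0) HR' HA h0 (fun phi => eqP (xchooseP (hex phi)))).
- by move=> p q; rewrite mcoeffD.
- by rewrite mcoeff1 eqxx.
Qed.
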